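(* Let $B$ be a finite set (of ''bath spins''), and introduce commuting indeterminates $b_{i,j}=b_{j,i}$ for distinct $i,j\in B$. For every subset $\mathcal S\subseteq B$ let $L_{\mathcal S}$ be a formal power series in the variables $\{b_{i,j}: i,j\in\mathcal S,\ i\neq j\}$ (with complex coefficients, which may depend on additional parameters such as a time $t$) whose constant term is nonzero. Define $\tilde L_{\mathcal S}$ recursively for all $\mathcal S\subseteq B$ by $\tilde L_{\mathcal S}=L_{\mathcal S}/\prod_{\mathcal C\subsetneq \mathcal S}\tilde L_{\mathcal C}$. Suppose that for every $\mathcal S\subseteq B$ and all subsets $\mathcal X,\mathcal Y\subseteq\mathcal S$ with $\mathcal X\cup\mathcal Y=\mathcal S$ and $\mathcal X\cap\mathcal Y=\emptyset$, setting $b_{i,j}=0$ for all $i\in\mathcal X$, $j\in\mathcal Y$ in $L_{\mathcal S}$ yields $L_{\mathcal X}L_{\mathcal Y}$. Then for every $\mathcal C\subseteq B$ with $k=|\mathcal C|\ge 1$, $\tilde L_{\mathcal C}$ equals a constant plus terms of total degree at least $k-1$ in the variables $b_{i,j}$; that is, $\tilde L_{\mathcal C}=\mathrm{const}+O(b_{i,j}^{k-1})$ (in the paper's physical setting where each $b_{i,j}$ is accompanied by a factor of time $t$, $\tilde L_{\mathcal C}=\mathrm{const}+O(b_{i,j}^{k-1}t^{k-1})$).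
   Context: Quotients and products are in the ring of formal power series; they are well defined since all constant terms are nonzero. The hypothesis on setting cross couplings to zero is called ''factorable under disconnected interactions''. *)

(* Defs.v *)
From HB Require Import structures.
From mathcomp Require Import all_boot all_order all_algebra.
From mathcomp Require Import complex.
From mathcomp Require Import Rstruct.
Set Implicit Arguments. Unset Strict Implicit. Unset Printing Implicit Defensive.
Import Order.TTheory GRing.Theory Num.Theory.
Local Open Scope ring_scope.

Definition Cplx : fieldType := complex Rdefinitions.R.

Section PowerSeries.
Variable B : finType.

(* The indeterminates b_{i,j} = b_{j,i}, i <> j, indexed by the 2-element
   subsets {i,j} of B. *)
Definition pvar := {e : {set B} | #|e| == 2%N}.

Definition monom := {ffun pvar -> nat}.
Definition mon0 : monom := [ffun => 0%N].
Definition mdeg (m : monom) : nat := (\sum_(v : pvar) m v)%N.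

Definition pseries := monom -> Cplx.

Definition mdivisors (m : monom) : seq monom :=
  let N := (\max_(v : pvar) m v)%N in
  map (fun d : {ffun pvar -> 'I_N.+1} => ([ffun v => nat_of_ord (d v)] : monom))
      (enum [pred d : {ffun pvar -> 'I_N.+1} | [forall v, (d v <= m v)%N]]).

Definition msub (m m1 : monom) : monom := [ffun v => (m v - m1 v)%N].

Definition ps1 : pseries := fun m => if m == mon0 then 1 else 0.

Definition psmul (f g : pseries) : pseries :=
  fun m => \sum_(m1 <- mdivisors m) f m1 * g (msub m m1).

(* Multiplicative inverse of a series with nonzero constant term,
   by the usual recursion on the total degree (fuel n >= mdeg m). *)
Fixpoint psinv_aux (f : pseries) (n : nat) (m : monom) : Cplx :=
  if m == mon0 then (f mon0)^-1 else
  match n with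
  | 0%N => 0
  | n'.+1 => - (f mon0)^-1 *
       \sum_(m1 <- mdivisors m | m1 != mon0) f m1 * psinv_aux f n' (msub m m1)
  end.

Definition psinv (f : pseries) : pseries := fun m => psinv_aux f (mdeg m) m.

Definition psdiv (f g : pseries) : pseries := psmul f (psinv g).

Definition ps_in_vars (S : {set B}) (f : pseries) : Prop :=
  forall m : monom, (exists v : pvar, (m v != 0%N) && ~~ (val v \subset S)) ->
    f m = 0.

Definition crosses (X Y : {set B}) (v : pvar) : bool :=
  (val v :&: X != set0) && (val v :&: Y != set0).

(* Substitute b_{i,j} = 0 for all i in X, j in Y. *)
Definition cut (X Y : {set B}) (f : pseries) : pseries :=
  fun m => if [exists v, (m v != 0%N) && crosses X Y v] then 0 else f m.

End PowerSeries.

(* Main.v *)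
Require Import Defs.
From HB Require Import structures.
From mathcomp Require Import all_boot all_order all_algebra.
From mathcomp Require Import zify.
From Stdlib Require Import FunctionalExtensionality.
Import Order.TTheory GRing.Theory Num.Theory.
Local Open Scope ring_scope.
Set Implicit Arguments. Unset Strict Implicit. Unset Printing Implicit Defensive.

Section PS.
Variable B : finType.
Local Notation monom := (monom B).
Local Notation mon0 := (mon0 B).
Local Notation pseries := (pseries B).
Local Notation ps1 := (@Defs.ps1 B).

Definition mle (a m : monom) := [forall v, a v <= m v]%N.

Lemma mem_mdivisors (m a : monom) : (a \in mdivisors m) = mle a m.
Proof.
rewrite /mdivisors /mle; apply/mapP/forallP.
- case=> d; rewrite mem_enum inE => /forallP H -> v; rewrite ffunE; exact: H.
- move=> H; set N := (\max_(v : pvar B) m v)%N.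
  have aN v : (a v < N.+1)%N.
    rewrite ltnS; apply: leq_trans (H v) _; exact: (leq_bigmax_cond (F := m)).
  exists [ffun v => (inord (a v) : 'I_N.+1)].
    rewrite mem_enum inE; apply/forallP => v; rewrite ffunE inordK //.
  apply/ffunP => v; rewrite !ffunE inordK //.
Qed.

Lemma uniq_mdivisors (m : monom) : uniq (mdivisors m).
Proof.
rewrite /mdivisors map_inj_uniq ?enum_uniq // => d1 d2 /ffunP H.
apply/ffunP => v; apply/val_inj; have := H v; rewrite !ffunE //.
Qed.

Definition madd (a b : monom) : monom := [ffun v => (a v + b v)%N].

Lemma sum_mdiv (m : monom) (s : seq monom) (F : monom -> Cplx) :
  uniq s -> (forall a, (a \in s) = mle a m) ->
  \sum_(a <- mdivisors m) F a = \sum_(a <- s) F a.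
Proof.
move=> us Hs; apply: perm_big; apply: uniq_perm => //; first exact: uniq_mdivisors.
by move=> a; rewrite mem_mdivisors Hs.
Qed.

Lemma mleP (a m : monom) : reflect (forall v, a v <= m v)%N (mle a m).
Proof. exact: forallP. Qed.


Lemma msubK (m a : monom) : mle a m -> msub m (msub m a) = a.
Proof. move/mleP=> H; apply/ffunP => v; rewrite /msub !ffunE; have := H v; move: (a v) (m v) => x y; lia. Qed.

Lemma mle_msub (m a : monom) : mle (msub m a) m.
Proof. apply/mleP => v; rewrite /msub ffunE; move: (a v) (m v) => x y; lia. Qed.

Lemma psmulC (f g : pseries) : psmul f g = psmul g f.
Proof.
apply: functional_extensionality => m; rewrite /psmul.
rewrite (sum_mdiv _ (s := map (msub m) (mdivisors m))).
- rewrite big_map; apply: eq_big_seq => a; rewrite mem_mdivisors => Ha.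
  by rewrite msubK // mulrC.
- rewrite map_inj_in_uniq ?uniq_mdivisors // => a b.
  rewrite !mem_mdivisors => Ha Hb E; by rewrite -(msubK Ha) E msubK.
- move=> a; apply/mapP/idP.
  + by case=> b _ ->; apply: mle_msub.
  + by move=> Ha; exists (msub m a); rewrite ?mem_mdivisors ?mle_msub // msubK.
Qed.

Lemma mle_trans (a b c : monom) : mle a b -> mle b c -> mle a c.
Proof.
move=> /mleP H1 /mleP H2; apply/mleP => v; have := H1 v; have := H2 v.
move: (a v) (b v) (c v) => x y z; lia.
Qed.

Lemma madd_inj (a : monom) : injective (madd^~ a).
Proof.
move=> b c /ffunP H; apply/ffunP => v; have := H v; rewrite /madd !ffunE.
move: (a v) (b v) (c v) => x y z; lia.
Qed.

Lemma sum_shift (m a : monom) (G : monom -> Cplx) : mle a m ->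
  \sum_(b <- mdivisors m | mle a b) G b =
  \sum_(c <- mdivisors (msub m a)) G (madd c a).
Proof.
move=> /mleP Ham; rewrite -big_filter -[RHS](big_map (madd^~ a) xpredT).
apply: perm_big; apply: uniq_perm.
- by rewrite filter_uniq ?uniq_mdivisors.
- by rewrite map_inj_uniq ?uniq_mdivisors //; apply: madd_inj.
move=> b; rewrite mem_filter mem_mdivisors; apply/andP/mapP.
- case=> /mleP H1 /mleP H2; exists (msub b a).
    rewrite mem_mdivisors; apply/mleP => v; rewrite /msub !ffunE.
    have := H1 v; have := H2 v; move: (a v) (b v) (m v) => x y z; lia.
  apply/ffunP => v; rewrite /msub /madd !ffunE.
  have := H1 v; move: (a v) (b v) => x y; lia.
- case=> c; rewrite mem_mdivisors => /mleP Hc ->; split; apply/mleP => v;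
  rewrite /madd ffunE.
    move: (a v) (c v) => x y; lia.
  have := Hc v; have := Ham v; rewrite /msub ffunE.
  move: (a v) (c v) (m v) => x y z; lia.
Qed.

Lemma sum_sub (m b : monom) (G : monom -> Cplx) : mle b m ->
  \sum_(a <- mdivisors b) G a = \sum_(a <- mdivisors m | mle a b) G a.
Proof.
move=> Hbm; rewrite -[RHS]big_filter; apply: sum_mdiv.
  by rewrite filter_uniq ?uniq_mdivisors.
move=> a; rewrite mem_filter mem_mdivisors andbC.
by case Hab: (mle a b); rewrite ?andbT ?andbF // (mle_trans Hab Hbm).
Qed.

Lemma psmulA (f g h : pseries) : psmul f (psmul g h) = psmul (psmul f g) h.
Proof.
apply: functional_extensionality => m; rewrite /psmul.
transitivity (\sum_(a <- mdivisors m) \sum_(b <- mdivisors m | mle a b)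
                 f a * g (msub b a) * h (msub m b)).
  apply: eq_big_seq => a; rewrite mem_mdivisors => Ham.
  rewrite sum_shift // mulr_sumr; apply: eq_bigr => c _; rewrite mulrA.
  congr (_ * g _ * h _); apply/ffunP => v; rewrite /msub /madd !ffunE.
    move: (a v) (c v) => x y; lia.
  move: (a v) (c v) (m v) => x y z; lia.
rewrite (exchange_big_dep xpredT) //=.
apply: eq_big_seq => b; rewrite mem_mdivisors => Hbm.
by rewrite (sum_sub _ Hbm) mulr_suml.
Qed.

Lemma mle0 (m : monom) : mle mon0 m.
Proof. apply/mleP => v; by rewrite ffunE. Qed.

Lemma mon0_in (m : monom) : mon0 \in mdivisors m.
Proof. by rewrite mem_mdivisors mle0. Qed.

Lemma sumD1 (m : monom) (F : monom -> Cplx) :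
  \sum_(a <- mdivisors m) F a = F mon0 + \sum_(a <- mdivisors m | a != mon0) F a.
Proof. by rewrite (bigD1_seq mon0) ?mon0_in ?uniq_mdivisors. Qed.

Lemma msub0 (m : monom) : msub m mon0 = m.
Proof. apply/ffunP => v; by rewrite /msub /mon0 !ffunE subn0. Qed.

Lemma mle_mon0 (a : monom) : mle a mon0 -> a = mon0.
Proof.
move/mleP=> H; apply/ffunP => v; have := H v; rewrite /mon0 !ffunE.
move: (a v) => x; lia.
Qed.

Lemma sum_at0 (F : monom -> Cplx) : \sum_(a <- mdivisors mon0) F a = F mon0.
Proof.
rewrite sumD1 big1_seq ?addr0 // => a /andP[Ha]; rewrite mem_mdivisors => /mle_mon0 E.
by rewrite E eqxx in Ha.
Qed.

Lemma psmul_at0 (f g : pseries) : psmul f g mon0 = f mon0 * g mon0.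
Proof. by rewrite /psmul sum_at0 msub0. Qed.

Lemma ps1_at0 : ps1 mon0 = 1.
Proof. by rewrite /Defs.ps1 eqxx. Qed.

Lemma mul1ps (f : pseries) : psmul ps1 f = f.
Proof.
apply: functional_extensionality => m; rewrite /psmul sumD1 ps1_at0 msub0 mul1r.
rewrite big1_seq ?addr0 // => a /andP[Ha _]; by rewrite /Defs.ps1 (negbTE Ha) mul0r.
Qed.

Lemma mulps1 (f : pseries) : psmul f ps1 = f.
Proof. by rewrite psmulC mul1ps. Qed.

Lemma mdeg_sub (m a : monom) : mle a m -> (mdeg (msub m a) + mdeg a)%N = mdeg m.
Proof.
move/mleP=> H; rewrite /mdeg -big_split /=; apply: eq_bigr => v _.
rewrite /msub ffunE; have := H v; move: (a v) (m v) => x y; lia.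
Qed.

Lemma mdeg_eq0 (a : monom) : (mdeg a == 0%N) = (a == mon0).
Proof.
rewrite /mdeg sum_nat_eq0; apply/forallP/eqP.
- move=> H; apply/ffunP => v; rewrite ffunE; exact/eqP/H.
- by move=> -> v; rewrite ffunE.
Qed.

Lemma eq_sum_cond (s : seq monom) (P : pred monom) (F1 F2 : monom -> Cplx) :
  (forall a, a \in s -> P a -> F1 a = F2 a) ->
  \sum_(a <- s | P a) F1 a = \sum_(a <- s | P a) F2 a.
Proof.
move=> H; rewrite big_seq_cond [RHS]big_seq_cond.
by apply: eq_bigr => a /andP[]; apply: H.
Qed.

Lemma psinv_fuel_aux (f : pseries) n1 n2 m : (mdeg m <= n1)%N -> (mdeg m <= n2)%N ->
  psinv_aux f n1 m = psinv_aux f n2 m.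
Proof.
elim: n1 n2 m => [|n1 IH] [|n2] m H1 H2 //=.
- have: mdeg m == 0%N by rewrite -leqn0.
  by rewrite mdeg_eq0 => ->.
- have: mdeg m == 0%N by rewrite -leqn0.
  by rewrite mdeg_eq0 => ->.
case: ifP => // Hm.
have IH' : forall a, a \in mdivisors m -> a != mon0 ->
    psinv_aux f n1 (msub m a) = psinv_aux f n2 (msub m a).
  move=> a; rewrite mem_mdivisors => Ha Ha0; apply: IH.
  - have := mdeg_sub Ha; have: mdeg a != 0%N by rewrite mdeg_eq0.
    move: (mdeg a) (mdeg m) (mdeg (msub m a)) H1 => x y z; lia.
  - have := mdeg_sub Ha; have: mdeg a != 0%N by rewrite mdeg_eq0.
    move: (mdeg a) (mdeg m) (mdeg (msub m a)) H2 => x y z; lia.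
move: IH'; move: (psinv_aux f n1) (psinv_aux f n2) => g1 g2 IH'.
by apply: congr1; apply: eq_sum_cond => a Ha Ha0; rewrite IH'.
Qed.

Lemma psinv_fuel (f : pseries) n m : (mdeg m <= n)%N ->
  psinv_aux f n m = psinv f m.
Proof. by move=> H; rewrite /psinv (@psinv_fuel_aux f n (mdeg m)). Qed.

Lemma psinv_at0 (f : pseries) : psinv f mon0 = (f mon0)^-1.
Proof. by rewrite /psinv; case: (mdeg mon0) => [|n] /=; rewrite eqxx. Qed.

Lemma psmulV (f : pseries) : f mon0 != 0 -> psmul f (psinv f) = ps1.
Proof.
move=> Hf; apply: functional_extensionality => m.
have [->|Hm] := eqVneq m mon0.
  by rewrite psmul_at0 psinv_at0 ps1_at0 mulfV.
rewrite /Defs.ps1 (negbTE Hm) /psmul sumD1 msub0.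
case E: (mdeg m) => [|n].
  by move/eqP: E; rewrite mdeg_eq0 (negbTE Hm).
rewrite {1}/psinv E /= (negbTE Hm) mulrA mulrN mulfV // mulN1r.
rewrite (@eq_sum_cond _ _ _ (fun a => f a * psinv f (msub m a))) ?addNr //.
move=> a; rewrite mem_mdivisors => Ha Ha0.
rewrite psinv_fuel //.
have := mdeg_sub Ha; have: mdeg a != 0%N by rewrite mdeg_eq0.
move: (mdeg a) (mdeg m) (mdeg (msub m a)) E => x y z; lia.
Qed.

Definition hasq (q : pred (pvar B)) (m : monom) := [exists v, (m v != 0%N) && q v].
Definition vanish (q : pred (pvar B)) (f : pseries) := forall m, hasq q m -> f m = 0.

Lemma hasq_split q (m a : monom) : mle a m -> hasq q m ->
  hasq q a || hasq q (msub m a).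
Proof.
move=> /mleP H /existsP[v /andP[Hv Hq]].
have := H v; case Ha: (a v == 0%N).
  move=> _; apply/orP; right; apply/existsP; exists v; rewrite Hq andbT /msub ffunE.
  move: Hv Ha; move: (a v) (m v) => x y; lia.
move=> _; apply/orP; left; apply/existsP; exists v; by rewrite Hq Ha.
Qed.

Lemma hasq_le q (m a : monom) : mle a m -> hasq q a -> hasq q m.
Proof.
move=> /mleP H /existsP[v /andP[Hv Hq]]; apply/existsP; exists v; rewrite Hq andbT.
have := H v; move: Hv; move: (a v) (m v) => x y; lia.
Qed.

Lemma hasq_msub q (m a : monom) : mle a m -> hasq q (msub m a) -> hasq q m.
Proof. by move=> _; apply: hasq_le; apply: mle_msub. Qed.

Lemma hasq_mon0 q : hasq q mon0 = false.
Proof. by apply/existsP => -[v]; rewrite ffunE eqxx. Qed.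

Lemma hasq_neq0 q m : hasq q m -> m != mon0.
Proof. by apply: contraTneq => ->; rewrite hasq_mon0. Qed.

Lemma vanish1 q : vanish q ps1.
Proof. by move=> m /hasq_neq0 Hm; rewrite /Defs.ps1 (negbTE Hm). Qed.

Lemma vanish_mul q f g : vanish q f -> vanish q g -> vanish q (psmul f g).
Proof.
move=> Hf Hg m Hm; rewrite /psmul big1_seq // => a /andP[_]; rewrite mem_mdivisors => Ha.
by case/orP: (hasq_split Ha Hm) => [/Hf ->|/Hg ->]; rewrite ?mul0r ?mulr0.
Qed.

Lemma vanish_inv q f : vanish q f -> vanish q (psinv f).
Proof.
move=> Hf; suff H : forall n m, (mdeg m <= n)%N -> hasq q m -> psinv_aux f n m = 0.
  by move=> m Hm; apply: H.
elim=> [|n IH] m Hmn Hm.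
  by move: (hasq_neq0 Hm); rewrite -mdeg_eq0 -leqn0 Hmn.
rewrite /= (negbTE (hasq_neq0 Hm)).
suff -> : \sum_(m1 <- mdivisors m | m1 != mon0) f m1 * psinv_aux f n (msub m m1) = 0 by rewrite mulr0.
apply: big1_seq => a /andP[Ha0]; rewrite mem_mdivisors => Ha.
case/orP: (hasq_split Ha Hm) => [/Hf ->|H]; rewrite ?mul0r //.
have Hd := mdeg_sub Ha; have Hd0 : mdeg a != 0%N by rewrite mdeg_eq0.
rewrite IH ?mulr0 //.
move: Hd0 Hd Hmn; move: (mdeg a) (mdeg m) (mdeg (msub m a)) => x y z; lia.
Qed.

Definition outv (C : {set B}) : pred (pvar B) := fun v => ~~ (val v \subset C).

Lemma invarsE (C : {set B}) (f : pseries) : ps_in_vars C f <-> vanish (outv C) f.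
Proof.
split=> H m Hm; apply: H.
  by case/existsP: Hm => v Hv; exists v.
by case: Hm => v Hv; apply/existsP; exists v.
Qed.

Lemma cutE (X Y : {set B}) (f : pseries) m : cut X Y f m = if hasq (crosses X Y) m then 0 else f m.
Proof. by []. Qed.

Lemma vanish_cut (X Y : {set B}) (f : pseries) : vanish (crosses X Y) (cut X Y f).
Proof. by move=> m Hm; rewrite cutE Hm. Qed.

Lemma cut_mul (X Y : {set B}) (f g : pseries) : cut X Y (psmul f g) = psmul (cut X Y f) (cut X Y g).
Proof.
apply: functional_extensionality => m; rewrite cutE; case: ifP => Hm.
  by rewrite (vanish_mul (@vanish_cut X Y f) (@vanish_cut X Y g)).
apply: eq_big_seq => a; rewrite mem_mdivisors => Ha; rewrite !cutE.
have -> : hasq (crosses X Y) a = false.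
  by apply: contraFF Hm; apply: hasq_le.
have -> // : hasq (crosses X Y) (msub m a) = false.
by apply: contraFF Hm; apply: hasq_msub.
Qed.

Lemma cut1 (X Y : {set B}) : cut X Y ps1 = ps1.
Proof.
apply: functional_extensionality => m; rewrite cutE; case: ifP => // H.
by rewrite (@vanish1 (crosses X Y)).
Qed.

Lemma cut_at0 (X Y : {set B}) (f : pseries) : cut X Y f mon0 = f mon0.
Proof. by rewrite cutE hasq_mon0. Qed.

Lemma cut_restr (X Y : {set B}) (C : {set B}) (f : pseries) : vanish (outv C) f ->
  cut X Y f = cut (X :&: C) (Y :&: C) f.
Proof.
move=> Hf; apply: functional_extensionality => m; rewrite !cutE.
case Ho: (hasq (outv C) m); first by rewrite Hf //; case: ifP; case: ifP.
have -> // : hasq (crosses X Y) m = hasq (crosses (X :&: C) (Y :&: C)) m.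
apply: eq_existsb => v; case Hv: (m v != 0%N) => //=.
have HvC : val v \subset C.
  apply: contraFT Ho => HvC; apply/existsP; exists v; by rewrite Hv.
by rewrite /crosses [X :&: C]setIC [Y :&: C]setIC !setIA (setIidPl HvC).
Qed.

Lemma cut_id (X Y : {set B}) (C : {set B}) (f : pseries) : vanish (outv C) f -> (C :&: X == set0) || (C :&: Y == set0) ->
  cut X Y f = f.
Proof.
move=> Hf HC; apply: functional_extensionality => m; rewrite cutE.
case: ifP => // /existsP[v /andP[Hv /andP[HX HY]]]; symmetry; apply: Hf.
apply/existsP; exists v; rewrite Hv /outv /=; apply/negP => HvC.
case/orP: HC => /eqP HC; [move: HX (setSI X HvC) | move: HY (setSI Y HvC)];
  rewrite HC subset0 => /negP H1 H2; apply: H1; exact: H2.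
Qed.

HB.instance Definition _ := Monoid.isComLaw.Build pseries ps1 (@psmul B) psmulA psmulC mul1ps.

End PS.

Section Gen.
Variable B : finType.
Local Notation monom := (monom B).
Local Notation mon0 := (mon0 B).
Local Notation pseries := (pseries B).
Local Notation ps1 := (@Defs.ps1 B).

Lemma vanish_sub (q q' : pred (pvar B)) (f : pseries) :
  (forall v, q' v -> q v) -> vanish q f -> vanish q' f.
Proof.
move=> H Hf m /existsP[v /andP[Hv Hq]]; apply: Hf; apply/existsP; exists v.
by rewrite Hv H.
Qed.

Lemma psmul_cancel (f g h : pseries) : f mon0 != 0 -> psmul f g = psmul f h -> g = h.
Proof.
move=> Hf E; have := congr1 (psmul (psinv f)) E.
by rewrite !psmulA [psmul (psinv f) f]psmulC psmulV // !mul1ps.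
Qed.

Lemma big_at0 (I : finType) (Pr : pred I) (F : I -> pseries) :
  (\big[@psmul B/ps1]_(i | Pr i) F i) mon0 = \prod_(i | Pr i) F i mon0.
Proof.
apply: (big_morph (fun f : pseries => f mon0)); last exact: ps1_at0.
by move=> f g; rewrite psmul_at0.
Qed.

Lemma big_cut (X Y : {set B}) (I : finType) (Pr : pred I) (F : I -> pseries) :
  cut X Y (\big[@psmul B/ps1]_(i | Pr i) F i) = \big[@psmul B/ps1]_(i | Pr i) cut X Y (F i).
Proof.
apply: (big_morph (cut X Y)); last exact: cut1.
by move=> f g; rewrite cut_mul.
Qed.

Lemma big_vanish q (I : finType) (Pr : pred I) (F : I -> pseries) :
  (forall i, Pr i -> vanish q (F i)) -> vanish q (\big[@psmul B/ps1]_(i | Pr i) F i).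
Proof.
move=> H; apply: (big_ind (vanish q)); [exact: vanish1| |exact: H].
by move=> f g; apply: vanish_mul.
Qed.

Lemma big_neq0 (I : finType) (Pr : pred I) (F : I -> pseries) :
  (forall i, Pr i -> F i mon0 != 0) -> (\big[@psmul B/ps1]_(i | Pr i) F i) mon0 != 0.
Proof.
move=> H; rewrite big_at0; apply: (big_ind (fun x : Cplx => x != 0)) => //.
  exact: oner_neq0.
by move=> x y; apply: mulf_neq0.
Qed.

Lemma set_ind (Pr : {set B} -> Prop) :
  (forall S : {set B}, (forall C : {set B}, C \proper S -> Pr C) -> Pr S) -> forall S, Pr S.
Proof.
move=> H S; move: {2}#|S|.+1 (ltnSn #|S|) => n; elim: n S => // n IH S HS.
apply: H => C HC; apply: IH; apply: leq_trans (proper_card HC) _; by rewrite -ltnS.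
Qed.

End Gen.

Section Main.
Variables (B : finType) (L Lt : {set B} -> pseries B).
Hypothesis HLvars : forall S : {set B}, ps_in_vars S (L S).
Hypothesis HL0 : forall S : {set B}, L S (mon0 B) != 0.
Hypothesis HLt : forall S : {set B},
  Lt S = psdiv (L S) (\big[@psmul B / @ps1 B]_(C : {set B} | C \proper S) Lt C).
Hypothesis Hfact : forall S X Y : {set B}, X :|: Y = S -> X :&: Y = set0 ->
  cut X Y (L S) = psmul (L X) (L Y).

Local Notation mon0 := (mon0 B).
Local Notation ps1 := (@Defs.ps1 B).
Local Notation P S := (\big[@psmul B / ps1]_(C : {set B} | C \proper S) Lt C).

Lemma LtA (S : {set B}) : Lt S mon0 != 0 /\ vanish (outv S) (Lt S).
Proof.
elim/set_ind: S => S IH.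
have HP : P S mon0 != 0 by apply: big_neq0 => C /IH[].
rewrite HLt /psdiv; split.
  by rewrite psmul_at0 psinv_at0 mulf_neq0 ?invr_eq0.
apply: vanish_mul; first exact/invarsE.
apply: vanish_inv; apply: big_vanish => C HC.
apply: vanish_sub (proj2 (IH C HC)) => v; apply: contra => H.
exact: subset_trans H (proper_sub HC).
Qed.

Lemma LtB (S : {set B}) : L S = \big[@psmul B / ps1]_(C : {set B} | C \subset S) Lt C.
Proof.
rewrite (bigD1 S) //=.
have -> : \big[@psmul B / ps1]_(C : {set B} | (C \subset S) && (C != S)) Lt C = P S.
  by apply: eq_bigl => C; rewrite properEneq andbC.
have HP : P S mon0 != 0 by apply: big_neq0 => C _; case: (LtA C).
rewrite HLt /psdiv -psmulA [psmul (psinv _) _]psmulC psmulV //.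
by rewrite [psmul (L S) ps1]psmulC mul1ps.
Qed.


Lemma nonempty_part (S X Y C : {set B}) : X :|: Y = S -> C \subset S ->
  ~~ (C \subset Y) -> X :&: C != set0.
Proof.
move=> HXY HCS /subsetPn[x HxC HxY]; apply/set0Pn; exists x.
have := subsetP HCS x HxC; rewrite -HXY inE (negbTE HxY) orbF => HxX.
by rewrite inE HxX HxC.
Qed.

Lemma LtQ (S : {set B}) : forall X Y : {set B}, X :|: Y = S -> X :&: Y = set0 ->
  X != set0 -> Y != set0 -> vanish predT (cut X Y (Lt S)).
Proof.
elim/set_ind: S => S IH X Y HXY HXY0 HX HY.
have E1 := Hfact HXY HXY0.
rewrite (LtB S) big_cut in E1.
rewrite (bigID (fun C : {set B} => C \subset X)) /= in E1.
have HXS : X \subset S by rewrite -HXY subsetUl.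
have HYS : Y \subset S by rewrite -HXY subsetUr.
have EX : \big[@psmul B / ps1]_(C : {set B} | (C \subset S) && (C \subset X)) cut X Y (Lt C) = L X.
  rewrite (LtB X); apply: eq_big => C.
    case HCX: (C \subset X); rewrite ?andbF ?andbT //.
    exact: subset_trans HCX HXS.
  move=> /andP[_ HCX]; apply: cut_id (proj2 (LtA C)) _; apply/orP; right.
  by rewrite -subset0 -HXY0 setSI.
rewrite EX in E1.
rewrite (bigID (fun C : {set B} => C \subset Y)) /= in E1.
have EY : \big[@psmul B / ps1]_(C : {set B} | ((C \subset S) && ~~ (C \subset X)) && (C \subset Y))
    cut X Y (Lt C) = \big[@psmul B / ps1]_(C : {set B} | (C \subset Y) && (C != set0)) Lt C.
  apply: eq_big => C.
    case HCY: (C \subset Y); rewrite ?andbF ?andbT //.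
    rewrite (subset_trans HCY HYS) /=; congr negb; apply/idP/eqP.
      by move=> HCX; apply/eqP; rewrite -subset0 -HXY0 subsetI HCX HCY.
    by move=> ->; rewrite sub0set.
  move=> /andP[_ HCY]; apply: cut_id (proj2 (LtA C)) _; apply/orP; left.
  by rewrite -subset0 -HXY0 [C :&: X]setIC setIS.
rewrite EY in E1.
have ES : \big[@psmul B / ps1]_(C : {set B} | ((C \subset S) && ~~ (C \subset X)) && ~~ (C \subset Y))
    cut X Y (Lt C) = psmul (cut X Y (Lt S)) (\big[@psmul B / ps1]_(C : {set B} |
      (((C \subset S) && ~~ (C \subset X)) && ~~ (C \subset Y)) && (C != S)) cut X Y (Lt C)).
  rewrite (bigD1 S) //= subxx /=; apply/andP; split.
    apply: contraNN HY => HSX; rewrite -subset0 -HXY0 subsetI subxx andbT.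
    exact: subset_trans HYS HSX.
  apply: contraNN HX => HSY; rewrite -subset0 -HXY0 subsetI subxx /=.
  exact: subset_trans HXS HSY.
rewrite ES in E1.
set BY := \big[@psmul B / ps1]_(C : {set B} | (C \subset Y) && (C != set0)) Lt C in E1.
set K := \big[@psmul B / ps1]_(C : {set B} | _) _ in E1.
have LY : L Y = psmul (Lt set0) BY by rewrite (LtB Y) (bigD1 set0) ?sub0set.
rewrite LY in E1.
have HBY : BY mon0 != 0 by apply: big_neq0 => C _; case: (LtA C).
have HK : K mon0 != 0.
  by rewrite /K; apply: big_neq0 => C _; rewrite cut_at0; case: (LtA C).
have E2 := psmul_cancel (HL0 X) E1.
rewrite [psmul (Lt set0) BY]psmulC in E2.
have E3 := psmul_cancel HBY E2.
have -> : cut X Y (Lt S) = psmul (Lt set0) (psinv K).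
  by rewrite -E3 -psmulA psmulV // mulps1.
apply: vanish_mul.
  apply: vanish_sub (proj2 (LtA set0)) => v _; rewrite /outv subset0.
  apply/eqP => H; have := valP v; by rewrite H cards0.
apply: vanish_inv; apply: big_vanish => C /andP[/andP[/andP[HCS HCX] HCY] HCS'].
rewrite (cut_restr X Y (proj2 (LtA C))).
apply: IH.
- by rewrite properEneq HCS' HCS.
- by rewrite -setIUl HXY; apply/setIidPr.
- apply/eqP; rewrite -subset0 -HXY0; apply/subsetP => x; rewrite !inE.
  by case/andP=> /andP[-> _] /andP[-> _].
- exact: nonempty_part HXY HCS HCY.
- rewrite setUC in HXY; exact: nonempty_part HXY HCS HCX.
Qed.


Lemma hasqT (m : monom B) : m != mon0 -> hasq predT m.
Proof.
move=> Hm; case/boolP: (hasq predT m) => // /existsPn H; case/negP: Hm.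
apply/eqP/ffunP => v; rewrite ffunE; have := H v; rewrite /= andbT negbK => /eqP ->.
by [].
Qed.

Lemma final (C : {set B}) : (1 <= #|C|)%N -> forall m : monom B, m != mon0 ->
  (mdeg m < #|C| - 1)%N -> Lt C m = 0.
Proof.
move=> HC m Hm Hdeg; apply/eqP; apply: contraT => HLm.
set E := [set v : pvar B | m v != 0%N].
have Hcross : forall X : {set B}, X \subset C -> X != set0 -> X != C ->
    exists v : pvar B, [/\ v \in E, val v :&: X != set0 & val v :&: (C :\: X) != set0].
  move=> X HXC HX0 HXC'.
  have HQ : vanish predT (cut X (C :\: X) (Lt C)).
    apply: LtQ => //.
    - apply/setP => x; rewrite !inE; case Hx: (x \in X) => //=.
      by rewrite (subsetP HXC x Hx).
    - by apply/setP => x; rewrite !inE; case: (x \in X).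
    - apply: contraNneq HXC' => H.
      by rewrite eqEsubset HXC -setD_eq0 H eqxx.
  have := HQ m (hasqT Hm).
  rewrite cutE; case: ifP => [/existsP[v /andP[Hv Hcr]] _ | _ H]; last first.
    by rewrite H eqxx in HLm.
  by exists v; case/andP: Hcr => H1 H2; split; rewrite ?inE.
have Hgrow : forall j, (1 <= j <= #|C|)%N -> exists2 X : {set B}, X \subset C &
    (#|X| == j) && (j.-1 <= #|[set v in E | val v \subset X]|)%N.
  elim=> // j IHj /andP[_ HjC].
  case: j IHj HjC => [|j] IHj HjC.
    have : (0 < #|C|)%N by [].
    rewrite card_gt0 => /set0Pn[x Hx]; exists [set x]; first by rewrite sub1set.
    by rewrite cards1.
  have [X HXC /andP[/eqP HXj Hedges]] : exists2 X : {set B}, X \subset C &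
      (#|X| == j.+1) && (j.+1.-1 <= #|[set v in E | val v \subset X]|)%N.
    by apply: IHj; rewrite /= ltnW.
  have HX0 : X != set0 by rewrite -card_gt0 HXj.
  have HXC' : X != C by apply: contraTneq HjC => <-; rewrite HXj ltnn.
  have [v [HvE Hv1 Hv2]] := Hcross X HXC HX0 HXC'.
  case/set0Pn: Hv1 => u; rewrite inE => /andP[Huv HuX].
  case/set0Pn: Hv2 => w; rewrite !inE => /andP[Hwv /andP[HwX HwC]].
  exists (w |: X); first by rewrite subUset sub1set HwC HXC.
  rewrite cardsU1 HwX HXj eqxx /=.
  have Huw : u != w by apply: contraNneq HwX => <-.
  have Hvset : val v = [set u; w].
    apply/eqP; rewrite eq_sym eqEcard; apply/andP; split.
      by rewrite subUset !sub1set Huv Hwv.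
    by rewrite cards2 (eqP (valP v)) Huw.
  have Hsub : v |: [set v0 in E | val v0 \subset X] \subset
              [set v0 in E | val v0 \subset w |: X].
    apply/subsetP => v0; rewrite !inE => /orP[/eqP -> | /andP[H1 H2]].
      have HvE' : m v != 0%N by move: HvE; rewrite inE.
      rewrite HvE' /= Hvset subUset !sub1set !inE eqxx HuX.
      by rewrite orbT.
    by rewrite H1 (subset_trans H2) // subsetUr.
  have Hvnot : v \notin [set v0 in E | val v0 \subset X].
    rewrite inE negb_and; apply/orP; right; apply/negP => H.
    by have := subsetP H w Hwv; rewrite (negbTE HwX).
  apply: leq_trans (subset_leq_card Hsub); by rewrite cardsU1 Hvnot.
have [X _ /andP[_ HX]] := Hgrow #|C| (ltac:(by rewrite HC leqnn)).
have HE : (#|[set v in E | val v \subset X]| <= #|E|)%N.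
  by apply: subset_leq_card; apply/subsetP => v; rewrite inE => /andP[].
have HEm : (#|E| <= mdeg m)%N.
  rewrite /mdeg (bigID (fun v => v \in E)) /= -sum1_card.
  apply: leq_trans (leq_addr _ _); apply: leq_sum => v; rewrite inE.
  by case: (m v).
move: HX HE HEm Hdeg; move: (#|C|) (#|E|) (mdeg m) (#|[set v in E | val v \subset X]|) => a b c d.
lia.
Qed.

End Main.

Unset Implicit Arguments.

Theorem theorem1 (B : finType)
    (L Lt : {set B} -> pseries B)
    (HLvars : forall S : {set B}, ps_in_vars S (L S))
    (HL0 : forall S : {set B}, L S (mon0 B) != 0)
    (HLt : forall S : {set B},
       Lt S = psdiv (L S) (\big[@psmul B / @ps1 B]_(C : {set B} | C \proper S) Lt C))
    (Hfact : forall S X Y : {set B}, X :|: Y = S -> X :&: Y = set0 ->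
       cut X Y (L S) = psmul (L X) (L Y)) :
  forall (C : {set B}), (1 <= #|C|)%N ->
  forall m : monom B, m != mon0 B -> (mdeg m < #|C| - 1)%N -> Lt C m = 0.
Proof. exact: final HLvars HL0 HLt Hfact. Qed.
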